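(* Let $n\ge 0$ and $l$ be integers with $n\le l\le 2n$, and fix a linear ordering of the alphabet $\{E,D,N\}$. Then $$\sum_{W\in Sch_L(n,l)} q^{\mathrm{maj}(W)}=\frac{1}{[l-n+1]}\begin{bmatrix}2(l-n)\\ l-n\end{bmatrix}_q\begin{bmatrix} l\\ 2n-l\end{bmatrix}_q \quad\text{if } E<N,$$ and $$\sum_{W\in Sch_L(n,l)} q^{\mathrm{maj}(W)}=\frac{q^{\,l-n}}{[l-n+1]}\begin{bmatrix}2(l-n)\\ l-n\end{bmatrix}_q\begin{bmatrix} l\\ 2n-l\end{bmatrix}_q \quad\text{if } E>N.$$
   Context: A Delannoy path from $(0,0)$ to $(m,n)$ is a lattice path using only the steps $E=(1,0)$, $D=(1,1)$, $N=(0,1)$; a path with $l$ steps is identified with the word $W=w_1w_2\cdots w_l$ over the alphabet $\{E,D,N\}$. $Del(m,n,l)$ denotes the set of Delannoy paths from $(0,0)$ to $(m,n)$ with exactly $l$ steps. A Schröder $n$-path is a Delannoy path from $(0,0)$ to $(n,n)$ that never goes (strictly) above the line $y=x$; $Sch_L(n,l)$ is the set of Schröder $n$-paths with exactly $l$ steps. Given a linear ordering of $\{E,D,N\}$, an index $i$ with $1\le i\le l-1$ is a descent of $W$ if $w_i>w_{i+1}$, and $\mathrm{maj}(W)=\sum_{i \text{ descent}} i$. Notation: $[k]=1+q+\cdots+q^{k-1}$, $[k]!=[1][2]\cdots[k]$ (with $[0]!=1$), and $\begin{bmatrix}a\\ b\end{bmatrix}_q=\frac{[a]!}{[b]![a-b]!}$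 for $0\le b\le a$. *)

(* Defs.v *)
From HB Require Import structures.
From mathcomp Require Import all_boot all_order all_algebra.
Set Implicit Arguments. Unset Strict Implicit. Unset Printing Implicit Defensive.
Import Order.TTheory GRing.Theory Num.Theory.

Definition step := 'I_3.
Definition E : step := @Ordinal 3 0 isT.
Definition D : step := @Ordinal 3 1 isT.
Definition N : step := @Ordinal 3 2 isT.

(* x-coordinate reached: number of E and D steps; y-coordinate: N and D steps *)
Definition xcoord (w : seq step) : nat := count (fun s => s != N) w.
Definition ycoord (w : seq step) : nat := count (fun s => s != E) w.

Definition schroeder (n : nat) (W : seq step) : bool :=
  [&& xcoord W == n, ycoord W == n &
      all (fun k => ycoord (take k W) <= xcoord (take k W)) (iota 0 (size W).+1)].

(* A linear ordering of {E,D,N} is given by an injective rank : step -> nat;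
   index i (1-based, 1 <= i <= l-1) is a descent iff rank w_i > rank w_{i+1}. *)
Definition maj (rank : step -> nat) (W : seq step) : nat :=
  \sum_(i < (size W).-1)
     (if rank (nth E W i) > rank (nth E W i.+1) then i.+1 else 0).

Definition qF := {fraction {poly rat}}.
Definition qv : qF := FracField.tofrac 'X.
Local Open Scope ring_scope.
Definition qint (k : nat) : qF := \sum_(i < k) qv ^+ i.
Definition qfact (k : nat) : qF := \prod_(i < k) qint i.+1.
Definition qbinom (a b : nat) : qF := qfact a / (qfact b * qfact (a - b)).

(* Main.v *)
Require Import Defs.
From HB Require Import structures.
From mathcomp Require Import all_boot all_order all_algebra.
From mathcomp Require Import ring zify.
Import GRing.Theory.
Local Open Scope ring_scope.

Lemma qv_ne1 k : (0 < k)%N -> 1 - qv ^+ k != 0.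
Proof.
move=> k0; rewrite /qv -tofracXn -tofrac1 -tofracB tofrac_eq0 subr_eq0.
apply/negP => /eqP H; have := congr1 (fun p : {poly rat} => size p) H; rewrite /=; rewrite size_polyXn size_poly1; lia.
Qed.

Set Implicit Arguments.
Unset Strict Implicit.

Section Gen.
Variable (R : fieldType) (q : R).
Hypothesis hq : forall k, (0 < k)%N -> 1 - q ^+ k != 0.

Definition gint (k : nat) : R := \sum_(i < k) q ^+ i.
Definition gfact (k : nat) : R := \prod_(i < k) gint i.+1.
Definition gbinom (a b : nat) : R := gfact a / (gfact b * gfact (a - b)).
Definition gbin (n k : nat) : R := if (k <= n)%N then gbinom n k else 0.
Definition gbm (n k : nat) : R := if k is k'.+1 then gbin n k' else 0.

Lemma gint_mul k : gint k * (1 - q) = 1 - q ^+ k.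
Proof.
elim: k => [|k IH]; first by rewrite /gint big_ord0 mul0r subrr.
rewrite /gint big_ord_recr /= mulrDl -/(gint k) IH exprS; ring.
Qed.

Lemma gint_ne0 k : (0 < k)%N -> gint k != 0.
Proof.
move=> k0; apply/negP => /eqP H; have := @hq k k0.
by rewrite -gint_mul H mul0r eqxx.
Qed.

Lemma gintD a b : gint (a + b) = gint a + q ^+ a * gint b.
Proof.
rewrite /gint big_split_ord /=; congr (_ + _).
by rewrite mulr_sumr; apply: eq_bigr => i _; rewrite exprD.
Qed.

Lemma gintS k : gint k.+1 = gint k + q ^+ k.
Proof. by rewrite /gint big_ord_recr. Qed.

Lemma gint1 : gint 1 = 1.
Proof. by rewrite gintS /gint big_ord0 add0r expr0. Qed.

Lemma gfactS k : gfact k.+1 = gfact k * gint k.+1.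
Proof. by rewrite /gfact big_ord_recr. Qed.

Lemma gfact0 : gfact 0 = 1.
Proof. by rewrite /gfact big_ord0. Qed.

Lemma gfact_ne0 k : gfact k != 0.
Proof.
elim: k => [|k IH]; first by rewrite gfact0 oner_eq0.
by rewrite gfactS mulf_neq0 // gint_ne0.
Qed.

Lemma gbin_gt n k : (n < k)%N -> gbin n k = 0.
Proof. by move=> h; rewrite /gbin ifF //; apply/negbTE; rewrite -ltnNge. Qed.

Lemma gbin_n0 n : gbin n 0 = 1.
Proof. by rewrite /gbin /gbinom subn0 gfact0 mul1r divff // gfact_ne0. Qed.

Lemma gbin_nn n : gbin n n = 1.
Proof. by rewrite /gbin leqnn /gbinom subnn gfact0 mulr1 divff // gfact_ne0. Qed.

Lemma gbinE j k : gbin (k + j) k = gfact (k + j) / (gfact k * gfact j).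
Proof. by rewrite /gbin leq_addr /gbinom addKn. Qed.

Lemma P1 n k : gbin n.+1 k.+1 = gbin n k + q ^+ k.+1 * gbin n k.+1.
Proof.
case: (ltngtP k n) => h.
- have [j ->] : exists j, n = (k.+1 + j)%N by exists (n - k.+1)%N; lia.
  rewrite (_ : gbin (k.+1 + j).+1 k.+1 = gbin (k.+1 + j.+1) k.+1); last by congr (gbin _ _); lia.
  rewrite (_ : gbin (k.+1 + j) k = gbin (k + j.+1) k); last by congr (gbin _ _); lia.
  rewrite !gbinE (_ : (k.+1 + j.+1) = (k.+1 + j).+1)%N; last by rewrite addnS.
  rewrite (gfactS (k.+1 + j)) (gfactS k) (gfactS j) -addnS gintD -addSnnS.
  have h1 := gfact_ne0 (k.+1 + j). have h2 := gfact_ne0 k. have h3 := gfact_ne0 j.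
  have h4 := @gint_ne0 k.+1 isT. have h5 := @gint_ne0 j.+1 isT.
  field. by rewrite h2 h3 h4 h5.
- rewrite [gbin n k.+1]gbin_gt; last lia.
  rewrite /gbin !ifF; try lia. ring.
- subst k. rewrite gbin_nn gbin_nn gbin_gt; last lia. ring.
Qed.


Lemma P2 p k : gbin (p + k).+1 k.+1 = q ^+ p * gbin (p + k) k + gbin (p + k) k.+1.
Proof.
case: p => [|j].
- rewrite add0n gbin_nn gbin_nn gbin_gt // expr0; ring.
- rewrite (_ : gbin (j.+1 + k).+1 k.+1 = gbin (k.+1 + j.+1) k.+1); last by congr (gbin _ _); lia.
  rewrite (_ : gbin (j.+1 + k) k = gbin (k + j.+1) k); last by congr (gbin _ _); lia.
  rewrite (_ : gbin (j.+1 + k) k.+1 = gbin (k.+1 + j) k.+1); last by congr (gbin _ _); lia.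
  rewrite !gbinE (_ : (k.+1 + j.+1) = (k.+1 + j).+1)%N; last by rewrite addnS.
  rewrite (gfactS (k.+1 + j)) (gfactS k) (gfactS j) -addnS (addnC k.+1 j.+1) gintD -addSnnS.
  have h1 := gfact_ne0 (k.+1 + j). have h2 := gfact_ne0 k. have h3 := gfact_ne0 j.
  have h4 := @gint_ne0 k.+1 isT. have h5 := @gint_ne0 j.+1 isT.
  field. by rewrite h2 h3 h4 h5.
Qed.

Lemma P1m n k : gbin n.+1 k = gbm n k + q ^+ k * gbin n k.
Proof.
case: k => [|k]; first by rewrite /= !gbin_n0 expr0 mul1r add0r.
by rewrite P1.
Qed.

Lemma P2m p k : gbin (p + k).+1 k = q ^+ p.+1 * gbm (p + k) k + gbin (p + k) k.
Proof.
case: k => [|k]; first by rewrite /= !gbin_n0 mulr0 add0r.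
by rewrite /= -addSnnS P2.
Qed.

Lemma gbin_sym a : gbin (a.+1 + a) a.+1 = gbin (a.+1 + a) a.
Proof.
rewrite [in RHS](_ : gbin (a.+1 + a) a = gbin (a + a.+1) a); last by congr (gbin _ _); lia.
rewrite !gbinE (addnC a a.+1); congr (_ / _); exact: mulrC.
Qed.

Lemma gcat K : gbin (K.+1 + K) K - q * gbm (K.+1 + K) K
  = (gint K.+2)^-1 * gbinom (K.+1 + K.+1) K.+1.
Proof.
rewrite /gbinom addKn.
case: K => [|K].
- rewrite /= gbin_n0 mulr0 subr0 (_ : (1+1 = 2)%N) // !gfactS gfact0 gint1 (gintS 1) gint1 expr1 !mul1r.
  have h : 1 + q != 0 by rewrite -[q]expr1 -gint1 -gintS gint_ne0.
  field. by rewrite oner_eq0 h.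
- rewrite /= (_ : gbin (K.+2 + K.+1) K.+1 = gbin (K.+1 + K.+2) K.+1); last by congr (gbin _ _); lia.
  rewrite (_ : gbin (K.+2 + K.+1) K = gbin (K + K.+3) K); last by congr (gbin _ _); lia.
  rewrite !gbinE.
  rewrite (_ : (K + K.+3) = K.+1 + K.+2)%N; last lia.
  rewrite (_ : (K.+2 + K.+2) = (K.+1 + K.+2).+1)%N; last lia.
  rewrite (gfactS (K.+1 + K.+2)) (_ : (K.+1 + K.+2).+1 = K.+2 + K.+2)%N; last lia.
  rewrite gintD.
  rewrite (gfactS K.+2) (gfactS K.+1) (gfactS K) (gintS K.+2) (gintS K.+1) (gintS K).
  have h1 := gfact_ne0 (K.+1 + K.+2). have h2 := gfact_ne0 K.
  have h3 : gint K + q ^+ K != 0 by rewrite -gintS gint_ne0.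
  have h4 : gint K + q ^+ K + q ^+ K.+1 != 0 by rewrite -gintS -gintS gint_ne0.
  have h5 : gint K + q ^+ K + q ^+ K.+1 + q ^+ K.+2 != 0 by rewrite -!gintS gint_ne0.
  rewrite !exprS.
  rewrite !exprS in h4 h5.
  have hu : q ^+ K = 1 - gint K * (1 - q) by rewrite gint_mul; ring.
  rewrite hu in h3 h4 h5 *.
  move: (gfact (K.+1 + K.+2)) (gfact K) (gint K) h1 h2 h3 h4 h5 => F0 FK G h1 h2 h3 h4 h5.
  field. by rewrite h2 h3 h4 h5.
Qed.

End Gen.

Unset Implicit Arguments.
Set Strict Implicit.

Local Close Scope ring_scope.

Definition L3 : seq step := [:: E; D; N].

Fixpoint words (m : nat) : seq (seq step) :=
  if m is m'.+1 then [seq rcons w c | w <- words m', c <- L3] else [:: [::]].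

Lemma step_cases (s : step) : [\/ s = E, s = D | s = N].
Proof.
case: s => [[|[|[|i]]] Hi].
- by constructor 1; apply: val_inj.
- by constructor 2; apply: val_inj.
- by constructor 3; apply: val_inj.
- by [].
Qed.

Lemma mem_L3 (s : step) : s \in L3.
Proof. by case: (step_cases s) => ->. Qed.

Lemma mem_words m w : (w \in words m) = (size w == m).
Proof.
elim: m w => [|m IH] w.
- by case: w.
- apply/allpairsP/idP => [[[w' c] [/= H1 H2 ->]]|].
  + by rewrite size_rcons eqSS -IH.
  + case/lastP: w => [//|w' c]; rewrite size_rcons eqSS => H.
    by exists (w', c); rewrite /= IH H mem_L3.
Qed.

Lemma uniq_words m : uniq (words m).
Proof.
elim: m => [//|m IH].
apply: (@allpairs_uniq_dep _ _ _ (fun w c => rcons w c) (words m) (fun _ => L3)) => //.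
by move=> [w1 c1] [w2 c2] _ _ /= /rcons_inj [-> ->].
Qed.

Definition cnt (s : step) (w : seq step) : nat := count_mem s w.
Definition lnd (w : seq step) : step := last E (filter (fun s => s != D) w).
Definition bal (w : seq step) : bool :=
  all (fun k => ycoord (take k w) <= xcoord (take k w)) (iota 0 (size w).+1).

Lemma cnt_rcons s w c : cnt s (rcons w c) = cnt s w + (c == s).
Proof. by rewrite /cnt -cats1 count_cat /= addn0. Qed.

Lemma xcoordE w : xcoord w = cnt E w + cnt D w.
Proof.
elim: w => [//|s w IH] /=; rewrite /cnt /= -/(cnt E w) -/(cnt D w) -/(xcoord w) IH.
by case: (step_cases s) => ->; rewrite /=; lia.
Qed.

Lemma ycoordE w : ycoord w = cnt N w + cnt D w.
Proof.
elim: w => [//|s w IH] /=; rewrite /cnt /= -/(cnt N w) -/(cnt D w) -/(ycoord w) IH.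
by case: (step_cases s) => ->; rewrite /=; lia.
Qed.

Lemma sizeE w : size w = cnt E w + cnt D w + cnt N w.
Proof.
elim: w => [//|s w IH] /=; rewrite /cnt /= -/(cnt N w) -/(cnt D w) -/(cnt E w) IH.
by case: (step_cases s) => ->; rewrite /=; lia.
Qed.

Lemma lnd_rcons w c : lnd (rcons w c) = if c == D then lnd w else c.
Proof.
rewrite /lnd filter_rcons; case: (c =P D) => [->|/eqP h] //=.
by rewrite last_rcons.
Qed.

Lemma lnd_neqD w : lnd w != D.
Proof.
rewrite /lnd; have := mem_last E [seq s <- w | s != D].
rewrite inE => /orP [/eqP ->|] //.
by rewrite mem_filter => /andP [].
Qed.

Lemma bal_rcons w c :
  bal (rcons w c) = bal w && (ycoord (rcons w c) <= xcoord (rcons w c)).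
Proof.
rewrite /bal size_rcons.
have -> : (size w).+2 = ((size w).+1 + 1)%N by rewrite addn1.
rewrite iotaD all_cat (_ : iota (0 + (size w).+1) 1 = [:: (size w).+1]) // all_seq1.
rewrite take_oversize ?size_rcons //; congr (_ && _).
apply: eq_in_all => k; rewrite mem_iota add0n => /andP [_ hk].
rewrite -cats1 takel_cat //.
Qed.

Lemma maj_rcons rank w c :
  maj rank (rcons w c) = (maj rank w + (if rank (last E w) > rank c then size w else 0))%N.
Proof.
case: w => [|x w].
  by rewrite /maj /= !big_ord0 if_same.
rewrite /maj size_rcons /= big_ord_recr /= -rcons_cons; congr addn.
- apply: eq_bigr => i _; have h1 := ltn_ord i.
  rewrite !nth_rcons /= h1 (_ : (i < (size w).+1)%N = true) //; lia.
- by rewrite !nth_rcons /= ltnn eqxx ltnSn (last_nth E).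
Qed.

Local Open Scope ring_scope.

Lemma tuple_sum (R : nmodType) l (P : pred (seq step)) (F : seq step -> R) :
  \sum_(W : l.-tuple step | P W) F W = \sum_(w <- words l | P w) F w.
Proof.
have -> : \sum_(W : l.-tuple step | P W) F W
        = \sum_(w <- map val (index_enum {: l.-tuple step}) | P w) F w.
  by rewrite big_map.
apply: perm_big; apply: uniq_perm.
- rewrite map_inj_uniq; [exact: index_enum_uniq | exact: val_inj].
- exact: uniq_words.
- move=> w; rewrite mem_words; apply/mapP/idP => [[W _ ->]|h].
  + by rewrite size_tuple.
  + by exists (Tuple h); rewrite ?mem_index_enum.
Qed.

Lemma sum_L3 (R : nmodType) (t : step) (H : step -> R) :
  \sum_(c <- L3) (if t == c then H c else 0) = H t.
Proof.
rewrite !big_cons big_nil.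
by case: (step_cases t) => -> /=; rewrite ?addr0 ?add0r.
Qed.

Lemma partL3 (R : nmodType) (s : seq (seq step)) (P : pred (seq step))
      (G : seq step -> step -> step -> R) :
  \sum_(w <- s | P w) G w (last E w) (lnd w) =
  \sum_(c <- L3) \sum_(e <- L3) \sum_(w <- s | P w && (last E w == c) && (lnd w == e)) G w c e.
Proof.
symmetry.
under eq_bigr => c _ do (under eq_bigr => e _ do rewrite big_mkcond; rewrite exchange_big).
rewrite exchange_big [RHS]big_mkcond; apply: eq_bigr => w _.
case: (P w) => /=; last first.
  by rewrite big1 // => c _; rewrite big1.
rewrite -[RHS](sum_L3 _ (last E w) (fun c => G w c (lnd w))).
apply: eq_bigr => c _; case: (last E w == c) => /=; last by rewrite big1.
rewrite -[RHS](sum_L3 _ (lnd w) (fun e => G w c e)).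
by apply: eq_bigr => e _.
Qed.

Lemma words_rcons_sum (R : nmodType) m (P : pred (seq step)) (F : seq step -> R) :
  \sum_(w <- words m.+1 | P w) F w =
  \sum_(w <- words m) \sum_(y <- L3) (if P (rcons w y) then F (rcons w y) else 0).
Proof.
rewrite big_mkcond.
change (words m.+1) with [seq rcons w c | w <- words m, c <- L3].
by rewrite big_allpairs_dep.
Qed.

Section Step.
Variables (R : fieldType) (q : R) (rank : step -> nat).

Definition Sg (a b d : nat) (c e : step) : R :=
  \sum_(w <- words (a + b + d) | [&& bal w, cnt E w == a, cnt N w == b, cnt D w == d,
                                     last E w == c & lnd w == e]) q ^+ maj rank w.

Definition Pw a b d (w : seq step) := [&& bal w, cnt E w == a, cnt N w == b & cnt D w == d].

Lemma SgE a b d c e :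
  Sg a b d c e = \sum_(w <- words (a + b + d) | Pw a b d w && (last E w == c) && (lnd w == e))
                    q ^+ maj rank w.
Proof. by apply: eq_bigl => w; rewrite /Pw -!andbA. Qed.

Lemma stepG a b d x e' :
  Sg (a + (x == E)) (b + (x == N)) (d + (x == D)) x e' =
  if (b + (x == N) <= a + (x == E))%N then
    \sum_(c <- L3) \sum_(e <- L3)
       (if e' == (if x == D then e else x)
        then Sg a b d c e * (if (rank x < rank c)%N then q ^+ (a + b + d) else 1) else 0)
  else 0.
Proof.
set m := (a + b + d)%N.
set ok := (b + (x == N) <= a + (x == E))%N.
set G := fun (w : seq step) (c e : step) =>
  if e' == (if x == D then e else x)
  then q ^+ maj rank w * (if (rank x < rank c)%N then q ^+ m else 1) else 0.
have hm : (a + (x == E) + (b + (x == N)) + (d + (x == D)) = m.+1)%N.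
  by rewrite /m; case: (step_cases x) => -> /=; lia.
have RHSE : (if ok then \sum_(c <- L3) \sum_(e <- L3)
       (if e' == (if x == D then e else x)
        then Sg a b d c e * (if (rank x < rank c)%N then q ^+ m else 1) else 0) else 0)
   = if ok then \sum_(w <- words m | Pw a b d w) G w (last E w) (lnd w) else 0.
  case: ok => //; rewrite partL3; apply: eq_bigr => c _; apply: eq_bigr => e _.
  rewrite SgE /G; case: ifP => _; last by rewrite big1.
  by rewrite big_distrl.
rewrite /m in RHSE; rewrite RHSE {RHSE} /Sg hm words_rcons_sum.
have perw : forall w, w \in words m ->
  \sum_(y <- L3) (if [&& bal (rcons w y), cnt E (rcons w y) == a + (x == E),
        cnt N (rcons w y) == b + (x == N), cnt D (rcons w y) == d + (x == D),
        last E (rcons w y) == x & lnd (rcons w y) == e'] then q ^+ maj rank (rcons w y) else 0)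
  = if ok then (if Pw a b d w then G w (last E w) (lnd w) else 0) else 0.
  move=> w; rewrite mem_words => /eqP sw.
  rewrite (eq_bigr (fun y => if x == y then (if [&& bal (rcons w y), cnt E (rcons w y) == a + (x == E),
        cnt N (rcons w y) == b + (x == N), cnt D (rcons w y) == d + (x == D),
        last E (rcons w y) == x & lnd (rcons w y) == e'] then q ^+ maj rank (rcons w y) else 0) else 0)); last first.
    move=> y _; case: (x =P y) => [<-|hxy]; first by [].
    rewrite last_rcons (_ : (y == x) = false); last by apply/eqP => h; apply: hxy.
    by rewrite !andbF.
  rewrite sum_L3 last_rcons eqxx andTb bal_rcons !cnt_rcons !eqn_add2r lnd_rcons.
  rewrite xcoordE ycoordE !cnt_rcons /Pw /G maj_rcons exprD sw.
  case: (cnt E w =P a) => [->|]; last by rewrite !andbF /= if_same.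
  case: (cnt N w =P b) => [->|]; last by rewrite !andbF /= if_same.
  case: (cnt D w =P d) => [->|]; last by rewrite !andbF /= if_same.
  rewrite (_ : (b + (x == N) + (d + (x == D)) <= a + (x == E) + (d + (x == D)))%N = ok); last first.
    by rewrite /ok leq_add2r.
  rewrite !andbT eq_sym.
  case: ok; case: (bal w); rewrite /= ?if_same //;
    (case: ifP => // _; by case: ifP => _; rewrite ?expr0 ?mulr1).
rewrite (eq_big_seq _ perw) {perw}.
case: ok; last by rewrite big1.
by rewrite [RHS]big_mkcond.
Qed.

End Step.

Section Main.
Variables (R : fieldType) (q : R).
Hypothesis hq : forall k, (0 < k)%N -> 1 - q ^+ k != 0.

Lemma keyalg C p d re rD rx : re != rD ->
  (if d is d'.+1 then C * (if (rD < re)%N then q ^+ p else 1) * gbin q (p + d') d'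
                      * (if (rx < rD)%N then q ^+ (p + d) else 1) else 0)
  + C * (if (re < rD)%N then q ^+ d else 1) * gbin q (p + d).-1 d
     * (if (rx < re)%N then q ^+ (p + d) else 1)
  = C * (if (rx < re)%N then q ^+ p else 1) * (if (rx < rD)%N then q ^+ d else 1) * gbin q (p + d) d.
Proof.
move=> hne; case: d => [|d'].
- rewrite !addn0 !expr0 !if_same !(gbin_n0 hq); ring.
- rewrite addnS /=.
  case: (ltngtP re rD) => h1; last by move: hne; rewrite h1 eqxx.
  + case: (ltngtP rx rD) => h2; case: (ltngtP rx re) => h3; try lia;
    first [rewrite (P1 hq (p + d') d') ?exprS ?exprD; ring
          |rewrite (P2 hq p d') ?exprS ?exprD; ring].
  + case: (ltngtP rx rD) => h2; case: (ltngtP rx re) => h3; try lia;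
    first [rewrite (P1 hq (p + d') d') ?exprS ?exprD; ring
          |rewrite (P2 hq p d') ?exprS ?exprD; ring].
Qed.

Variable rank : step -> nat.
Hypothesis hrank : injective rank.

Definition CC a b (e : step) : R :=
  if e == E then
    (if (b <= a)%N then q ^+ (if (rank E < rank N)%N then b else 0)
                         * (gbin q (a + b).-1 b - gbm q (a + b).-1 b) else 0)
  else if e == N then
    (if (b <= a)%N then
       (if b is b'.+1 then q ^+ (if (rank N < rank E)%N then a else 0)
                          * (gbin q (a + b') b' - q * gbm q (a + b') b') else 0)
     else 0)
  else 0.

Lemma CC_gt a b e : (a < b)%N -> CC a b e = 0.
Proof.
move=> h; rewrite /CC (_ : (b <= a)%N = false); last by lia.
by rewrite !if_same.
Qed.

Lemma rEN : rank E != rank N.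
Proof. by apply/eqP => /hrank. Qed.
Lemma rED : rank E != rank D.
Proof. by apply/eqP => /hrank. Qed.
Lemma rND : rank N != rank D.
Proof. by apply/eqP => /hrank. Qed.

Lemma CCrecE a b : CC a.+1 b E = if (b <= a.+1)%N then
  \sum_(e <- L3) CC a b e * (if (rank E < rank e)%N then q ^+ (a + b) else 1) else 0.
Proof.
rewrite !big_cons big_nil /CC /= ltnn.
have [hb|hb] := leqP b a.+1; last by [].
have [hba|hba] := leqP b a.
- idtac.
  case: b hb hba => [|b'] hb hba.
  + rewrite ?if_same ?expr0 ?(gbin_n0 hq) /=; ring.
  + rewrite /= !addnS /= (P2 hq a b') (P2m hq a b').
    case: (ltngtP (rank E) (rank N)) => h; last by move: rEN; rewrite h eqxx.
    * rewrite ?exprS ?exprD; ring.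
    * rewrite ?exprS ?exprD; ring.
- have -> : b = a.+1 by lia.
  rewrite addnS -addSn /= gbin_sym subrr mulr0; ring.
Qed.

Lemma CCrecN a b : CC a b.+1 N = if (b.+1 <= a)%N then
  \sum_(e <- L3) CC a b e * (if (rank N < rank e)%N then q ^+ (a + b) else 1) else 0.
Proof.
rewrite !big_cons big_nil /CC /= ltnn.
have [hb|hb] := leqP b.+1 a; last by [].
rewrite (_ : (b <= a)%N = true); last by lia.
case: b hb => [|b'] hb.
- rewrite ?addn0 ?if_same ?expr0 ?(gbin_n0 hq) /=.
  case: (ltngtP (rank E) (rank N)) => h; last by move: rEN; rewrite h eqxx.
  + rewrite ?(gbin_n0 hq) ?expr0; ring.
  + rewrite ?(gbin_n0 hq) ?expr0; ring.
- rewrite /= addnS /= (P1 hq (a + b') b') (P1m hq (a + b') b').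
  case: (ltngtP (rank E) (rank N)) => h; last by move: rEN; rewrite h eqxx.
  * rewrite ?exprS ?exprD; ring.
  * rewrite ?exprS ?exprD; ring.
Qed.

Definition Fm a b d (c e : step) : R :=
  if e == D then 0 else
  if c == D then
    (if d is d'.+1 then CC a b e * (if (rank D < rank e)%N then q ^+ (a + b) else 1)
                         * gbin q (a + b + d') d' else 0)
  else if c == e then
    CC a b e * (if (rank e < rank D)%N then q ^+ d else 1) * gbin q (a + b + d).-1 d
  else 0.

Lemma KeyAll a b d e x :
  \sum_(c <- L3) Fm a b d c e * (if (rank x < rank c)%N then q ^+ (a + b + d) else 1)
  = CC a b e * (if (rank x < rank e)%N then q ^+ (a + b) else 1)
      * (if (rank x < rank D)%N then q ^+ d else 1) * gbin q (a + b + d) d.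
Proof.
rewrite !big_cons big_nil /Fm.
case: (step_cases e) => ->.
- rewrite /= -(keyalg (CC a b E) (a + b) d (rank E) (rank D) (rank x) rED).
  case: d => [|d'] /=; ring.
- rewrite /CC /=; ring.
- rewrite /= -(keyalg (CC a b N) (a + b) d (rank N) (rank D) (rank x) rND).
  case: d => [|d'] /=; ring.
Qed.

Local Notation S := (Sg R q rank).

Lemma count_pos (s : step) w : s \in w -> (0 < cnt s w)%N.
Proof. by move=> h; rewrite /cnt -has_count has_pred1. Qed.

Lemma Sg_base c e : S 0 0 0 c e = if (c == E) && (e == E) then 1 else 0.
Proof.
rewrite /Sg big_cons big_nil /=.
rewrite /maj /= big_ord0 expr0 addr0.
by rewrite /lnd /= !(eq_sym E).
Qed.

Lemma Sg_lastD a b e : S a b 0 D e = 0.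
Proof.
rewrite /Sg big_mkcond big1 // => w _.
case: ifP => // /andP [_ /andP [_ /andP [_ /andP [hD /andP [hl _]]]]].
have : D \in E :: w by rewrite -(eqP hl) mem_last.
rewrite inE /= => hw; have := count_pos _ _ hw; rewrite (eqP hD).
by [].
Qed.

Lemma Sg_lastN a d e : S a 0 d N e = 0.
Proof.
rewrite /Sg big_mkcond big1 // => w _.
case: ifP => // /andP [_ /andP [_ /andP [hN /andP [_ /andP [hl _]]]]].
have : N \in E :: w by rewrite -(eqP hl) mem_last.
rewrite inE /= => hw; have := count_pos _ _ hw; rewrite (eqP hN).
by [].
Qed.

Lemma Sg_lastE b d e : (0 < b + d)%N -> S 0 b d E e = 0.
Proof.
move=> hbd; rewrite /Sg big_mkcond big1_seq // => w; rewrite mem_words => /eqP sw.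
case: ifP => // /andP [_ /andP [hE /andP [_ /andP [_ /andP [hl _]]]]].
case: w sw hE hl => [|y w'] sw hE hl; first by rewrite /= in sw; lia.
have : E \in y :: w' by rewrite -(eqP hl) /= mem_last.
move=> hw; have := count_pos _ _ hw; rewrite (eqP hE).
by [].
Qed.

Lemma stepE a b d e : S a.+1 b d E e =
  if (b <= a.+1)%N then \sum_(c <- L3) \sum_(e' <- L3)
    (if e == E then S a b d c e' * (if (rank E < rank c)%N then q ^+ (a + b + d) else 1) else 0)
  else 0.
Proof. by have := stepG R q rank a b d E e; rewrite /= !addn0 addn1. Qed.

Lemma stepN a b d e : S a b.+1 d N e =
  if (b.+1 <= a)%N then \sum_(c <- L3) \sum_(e' <- L3)
    (if e == N then S a b d c e' * (if (rank N < rank c)%N then q ^+ (a + b + d) else 1) else 0)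
  else 0.
Proof. by have := stepG R q rank a b d N e; rewrite /= !addn0 addn1. Qed.

Lemma stepD a b d e : S a b d.+1 D e =
  if (b <= a)%N then \sum_(c <- L3) \sum_(e' <- L3)
    (if e == e' then S a b d c e' * (if (rank D < rank c)%N then q ^+ (a + b + d) else 1) else 0)
  else 0.
Proof. by have := stepG R q rank a b d D e; rewrite /= !addn0 addn1. Qed.

Lemma CC00E : CC 0 0 E = 1.
Proof. by rewrite /CC /= !if_same expr0 (gbin_n0 hq) subr0 mul1r. Qed.

Lemma sumL3_exch (F : step -> step -> R) :
  \sum_(c <- L3) \sum_(e <- L3) F c e = \sum_(e <- L3) \sum_(c <- L3) F c e.
Proof. exact: exchange_big. Qed.

Lemma mainSg m : forall a b d c e, (a + b + d)%N = m -> S a b d c e = Fm a b d c e.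
Proof.
elim: m => [|m IH] a b d c e hm.
- have [-> -> ->] : [/\ a = 0, b = 0 & d = 0]%N by split; lia.
  rewrite Sg_base /Fm.
  case: (step_cases c) => ->; case: (step_cases e) => -> //=;
    rewrite ?CC00E ?expr0 ?if_same ?(gbin_n0 hq) ?mulr1 //.
- case: (step_cases c) => ->.
  +
    case: a hm => [|a'] hm.
    * rewrite Sg_lastE; last by lia.
      rewrite /Fm; case: (step_cases e) => -> //=.
      case: b hm => [|b'] hm.
      -- rewrite (gbin_gt q); first by rewrite mulr0.
         rewrite add0n; lia.
      -- by rewrite CC_gt // mul0r mul0r.
    * rewrite stepE.
      case: (step_cases e) => -> /=.
      -- have -> : \sum_(c <- L3) \sum_(e' <- L3)
              S a' b d c e' * (if (rank E < rank c)%N then q ^+ (a' + b + d) else 1)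
           = \sum_(e' <- L3) CC a' b e' * (if (rank E < rank e')%N then q ^+ (a' + b) else 1)
              * (if (rank E < rank D)%N then q ^+ d else 1) * gbin q (a' + b + d) d.
           rewrite sumL3_exch; apply: eq_bigr => e' _; rewrite -KeyAll.
           apply: eq_bigr => c0 _; rewrite IH //; lia.
         rewrite /Fm /= CCrecE.
         case: ifP => _; last by rewrite !mul0r.
         by rewrite !big_distrl.
      -- rewrite big1 => [|c0 _]; last by rewrite big1.
         by rewrite if_same /Fm.
      -- rewrite big1 => [|c0 _]; last by rewrite big1.
         by rewrite if_same /Fm.
  +
    case: d hm => [|d'] hm.
    * by rewrite Sg_lastD /Fm /= if_same.
    * rewrite stepD.
      have -> : \sum_(c <- L3) \sum_(e' <- L3)
           (if e == e' then S a b d' c e' * (if (rank D < rank c)%N then q ^+ (a + b + d') else 1) else 0)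
         = \sum_(c <- L3) Fm a b d' c e * (if (rank D < rank c)%N then q ^+ (a + b + d') else 1).
        apply: eq_bigr => c0 _; rewrite (sum_L3 _ e (fun e' => S a b d' c0 e' *
           (if (rank D < rank c0)%N then q ^+ (a + b + d') else 1))).
        rewrite IH //; lia.
      rewrite KeyAll ltnn mulr1 /Fm /=.
      case: ifP => hba; last first.
        by rewrite CC_gt ?mul0r ?if_same //; lia.
      by case: (step_cases e) => -> //=; rewrite /CC /= !mul0r.
  +
    case: b hm => [|b'] hm.
    * rewrite Sg_lastN /Fm; case: (step_cases e) => -> //=.
      by rewrite /CC /= !mul0r.
    * rewrite stepN.
      case: (step_cases e) => -> /=.
      -- rewrite big1 => [|c0 _]; last by rewrite big1.
         by rewrite if_same /Fm.
      -- rewrite big1 => [|c0 _]; last by rewrite big1.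
         by rewrite if_same /Fm.
      -- have -> : \sum_(c <- L3) \sum_(e' <- L3)
              S a b' d c e' * (if (rank N < rank c)%N then q ^+ (a + b' + d) else 1)
           = \sum_(e' <- L3) CC a b' e' * (if (rank N < rank e')%N then q ^+ (a + b') else 1)
              * (if (rank N < rank D)%N then q ^+ d else 1) * gbin q (a + b' + d) d.
           rewrite sumL3_exch; apply: eq_bigr => e' _; rewrite -KeyAll.
           apply: eq_bigr => c0 _; rewrite IH //; lia.
         rewrite /Fm /= CCrecN.
         have -> : (a + b'.+1 + d).-1 = (a + b' + d)%N by rewrite addnS addSn.
         case: ifP => _; last by rewrite !mul0r.
         by rewrite !big_distrl.
Qed.

Lemma KeyNoW a b d e :
  \sum_(c <- L3) Fm a b d c e = CC a b e * gbin q (a + b + d) d.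
Proof.
set rx := (rank E + rank D + rank N).+1.
have h1 : (rx < rank E)%N = false by rewrite /rx; lia.
have h2 : (rx < rank D)%N = false by rewrite /rx; lia.
have h3 : (rx < rank N)%N = false by rewrite /rx; lia.
rewrite !big_cons big_nil /Fm.
case: (step_cases e) => ->.
- have K := keyalg (CC a b E) (a + b) d (rank E) (rank D) rx rED.
  rewrite h1 h2 !mulr1 in K; rewrite /= -K.
  case: d {K} => [|d'] /=; ring.
- rewrite /CC /=; ring.
- have K := keyalg (CC a b N) (a + b) d (rank N) (rank D) rx rND.
  rewrite h3 h2 !mulr1 in K; rewrite /= -K.
  case: d {K} => [|d'] /=; ring.
Qed.

Lemma total_gen n l : (n <= l <= 2 * n)%N ->
  \sum_(w <- words l | schroeder n w) q ^+ maj rank w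
  = gbin q l (2 * n - l) * (CC (l - n) (l - n) E + CC (l - n) (l - n) N).
Proof.
move=> /andP [h1 h2].
set k := (l - n)%N; set d := (2 * n - l)%N.
have hl : l = (k + k + d)%N by rewrite /k /d; lia.
rewrite big_seq_cond (eq_bigl (fun w => (w \in words l) && Pw k k d w)); last first.
  move=> w; case: (boolP (w \in words l)) => //=; rewrite mem_words => /eqP sw.
  rewrite /schroeder -/(bal w) /Pw xcoordE ycoordE.
  have := sizeE w; rewrite sw => hs.
  case: (bal w); last by rewrite !andbF.
  rewrite andbT /=.
  apply/andP/and3P => [[/eqP e1 /eqP e2]|[/eqP e1 /eqP e2 /eqP e3]];
    (split; apply/eqP; rewrite /k /d; lia).
rewrite -big_seq_cond (partL3 _ _ _ (fun w c e => q ^+ maj rank w)).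
rewrite (eq_bigr (fun c => \sum_(e <- L3) Fm k k d c e)); last first.
  move=> c _; apply: eq_bigr => e _; rewrite -(mainSg (k + k + d)) //.
  by rewrite SgE -hl.
rewrite exchange_big.
rewrite (eq_bigr (fun e => CC k k e * gbin q (k + k + d) d)); last first.
  by move=> e _; rewrite KeyNoW.
rewrite !big_cons big_nil -hl /CC /=; ring.
Qed.

Lemma cat_EN k : (rank E < rank N)%N ->
  CC k k E + CC k k N = (gint q k.+1)^-1 * gbinom q (2 * k) k.
Proof.
move=> h; rewrite /CC /= leqnn h (_ : (rank N < rank E)%N = false); last by lia.
case: k => [|k'].
- rewrite /= expr0 (gbin_n0 hq) subr0 mul1r addr0 gint1 invr1 mul1r.
  by rewrite /gbinom /= gfact0 mulr1 divff // oner_eq0.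
- rewrite addnS /= gbin_sym subrr mulr0 add0r expr0 mul1r (gcat hq).
  by rewrite mul2n -addnn.
Qed.

Lemma cat_NE k : (rank N < rank E)%N ->
  CC k k E + CC k k N = q ^+ k / (gint q k.+1) * gbinom q (2 * k) k.
Proof.
move=> h; rewrite /CC /= leqnn h (_ : (rank E < rank N)%N = false); last by lia.
case: k => [|k'].
- rewrite /= expr0 (gbin_n0 hq) subr0 mul1r addr0 gint1 invr1 mulr1.
  by rewrite mul1r /gbinom muln0 subnn gfact0 mulr1 invr1 mulr1.
- rewrite addnS /= gbin_sym subrr mulr0 add0r (gcat hq).
  by rewrite mul2n -addnn mulrA.
Qed.

Lemma gbin_le n k : (k <= n)%N -> gbin q n k = gbinom q n k.
Proof. by move=> h; rewrite /gbin h. Qed.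

Lemma final_EN n l : (rank E < rank N)%N -> (n <= l <= 2 * n)%N ->
  \sum_(w <- words l | schroeder n w) q ^+ maj rank w
  = (gint q (l - n).+1)^-1 * gbinom q (2 * (l - n)) (l - n) * gbinom q l (2 * n - l).
Proof.
move=> h hnl; rewrite total_gen // cat_EN // gbin_le; last by lia.
by rewrite mulrC.
Qed.

Lemma final_NE n l : (rank N < rank E)%N -> (n <= l <= 2 * n)%N ->
  \sum_(w <- words l | schroeder n w) q ^+ maj rank w
  = q ^+ (l - n) / gint q (l - n).+1 * gbinom q (2 * (l - n)) (l - n) * gbinom q l (2 * n - l).
Proof.
move=> h hnl; rewrite total_gen // cat_NE // gbin_le; last by lia.
by rewrite mulrC.
Qed.

End Main.

Theorem theorem1p1 (n l : nat) (rank : step -> nat) :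
  injective rank -> (n <= l <= 2 * n)%N ->
  ((rank E < rank N)%N ->
     \sum_(W : l.-tuple step | schroeder n W) qv ^+ maj rank W
     = (qint (l - n).+1)^-1 * qbinom (2 * (l - n)) (l - n) * qbinom l (2 * n - l))
  /\
  ((rank N < rank E)%N ->
     \sum_(W : l.-tuple step | schroeder n W) qv ^+ maj rank W
     = qv ^+ (l - n) / qint (l - n).+1 * qbinom (2 * (l - n)) (l - n) * qbinom l (2 * n - l)).
Proof.
move=> hr hnl; split => h.
- rewrite (tuple_sum _ l (schroeder n) (fun w => qv ^+ maj rank w)).
  exact: (@final_EN _ qv qv_ne1 rank hr n l h hnl).
- rewrite (tuple_sum _ l (schroeder n) (fun w => qv ^+ maj rank w)).
  exact: (@final_NE _ qv qv_ne1 rank hr n l h hnl).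
Qed.
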